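(* Every congestion game structure $\mathcal G=(\mathcal R,c,\mathcal S)$ is equivalent to a common-OD constrained routing game over a (two-terminal) series-parallel network.
   Context: A congestion game structure $\mathcal G=(\mathcal R,c,\mathcal S)$: finite resource set $\mathcal R$ with continuous nondecreasing costs $c_r:\mathbb R_+\to\mathbb R_+$, finite commodity set $\mathcal H$, each $h$ with a nonempty finite family $\mathcal S^h\subseteq 2^{\mathcal R}$ of strategies. For demand $\mu\in\mathbb R_+^{\mathcal H}$, a feasible flow is $f=(f^h_s)$, $f^h_s\ge0$, $\sum_{s\in\mathcal S^h}f^h_s=\mu^h$; loads $x_r=\sum_h\sum_{s\in\mathcal S^h:r\in s}f^h_s$; strategy cost $c_s(f)=\sum_{r\in s}c_r(x_r)$. A constrained routing game $(G,c,\mathcal P)$ consists of a directed multigraph $G=(V,E)$, edge costs $c_e$ (continuous nondecreasing), and for each commodity $h$ of a finite set $\mathcal H$ a nonempty set $\mathcal P^h$ of paths from an origin $O^h$ to a destination $D^h$; it is the congestion game with resources $E$ and strategy sets $\mathcal S^h=\mathcal P^h$ (paths viewed as edge sets). It is common-OD if all commodities share the same origin and destination. A two-terminal series-parallel network is a directed multigraph obtained from single edges by finitely many series compositions (identifying the destination of one with the origin of the other) and parallel compositions (identifying origins and identifying destinations). Two congestion games are equivalent if there are bijections $h\leftrightarrow\tilde h$ between their commodities and $s\leftrightarrow\tilde s$ between their strategies (respecting commodities) such that for every demand $\mu$ and every feasible flow $f$ of the first, the flow $\tilde f$ with $\tilde f_{\tilde s}=f_s$ is feasible for the second and $\tilde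 c_{\tilde s}(\tilde f)=c_s(f)$ for all strategies. *)

(* Defs.v *)
From HB Require Import structures.
From mathcomp Require Import all_boot all_order all_algebra.
From mathcomp Require Import all_classical all_reals all_analysis.
Set Implicit Arguments. Unset Strict Implicit. Unset Printing Implicit Defensive.
Import Order.TTheory GRing.Theory Num.Theory.
Import numFieldNormedType.Exports.
Local Open Scope ring_scope.

(* Represented as c : R -> R, constrained on the nonnegative reals.    *)
Definition cost_fun_ok (R : realType) (c : R -> R) : Prop :=
  [/\ (forall x : R, 0 <= x -> 0 <= c x),
      (forall x y : R, 0 <= x -> x <= y -> c x <= c y)
    & ({within [set x : R | 0 <= x], continuous c})%classic].

(* A congestion game structure (Res, c, S): Res the finite resource set,
   Com the finite commodity set, S h the family of strategies of h
   (a set of subsets of Res), c r the cost of resource r.               *)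

Definition strategies_nonempty (Res Com : finType)
  (S : Com -> {set {set Res}}) : Prop := forall h, S h != finset.set0.

(* feasible flow for demand mu: f h s is the flow of commodity h on
   strategy s (only values for s \in S h are meaningful). *)
Definition feasible_flow (R : realType) (Res Com : finType)
  (S : Com -> {set {set Res}}) (mu : Com -> R) (f : Com -> {set Res} -> R)
  : Prop :=
  forall h, (forall s, s \in S h -> 0 <= f h s) /\
            \sum_(s in S h) f h s = mu h.

Definition load (R : realType) (Res Com : finType)
  (S : Com -> {set {set Res}}) (f : Com -> {set Res} -> R) (r : Res) : R :=
  \sum_(h : Com) \sum_(s in S h | r \in s) f h s.

Definition strategy_cost (R : realType) (Res Com : finType)
  (S : Com -> {set {set Res}}) (c : Res -> R -> R)
  (f : Com -> {set Res} -> R) (s : {set Res}) : R :=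
  \sum_(r in s) c r (load S f r).

(* Equivalence of two congestion games: bijection phiH between commodities,
   and for each commodity h a bijection phiS h between S1 h and
   S2 (phiH h); for every demand mu and feasible flow f of the first game,
   the transported demand/flow (any mu2, f2 agreeing with mu, f through the
   bijections) is feasible for the second game and strategy costs agree. *)
Definition cg_equivalent (R : realType)
  (Res1 Com1 : finType) (S1 : Com1 -> {set {set Res1}}) (c1 : Res1 -> R -> R)
  (Res2 Com2 : finType) (S2 : Com2 -> {set {set Res2}}) (c2 : Res2 -> R -> R)
  : Prop :=
  exists (phiH : Com1 -> Com2) (phiS : Com1 -> {set Res1} -> {set Res2}),
  [/\ bijective phiH,
      (forall h, {in S1 h &, injective (phiS h)}),
      (forall h, phiS h @: S1 h = S2 (phiH h))
    & forall (mu : Com1 -> R) (f : Com1 -> {set Res1} -> R)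
             (mu2 : Com2 -> R) (f2 : Com2 -> {set Res2} -> R),
        (forall h, 0 <= mu h) ->
        feasible_flow S1 mu f ->
        (forall h, mu2 (phiH h) = mu h) ->
        (forall h s, s \in S1 h -> f2 (phiH h) (phiS h s) = f h s) ->
        feasible_flow S2 mu2 f2 /\
        (forall h s, s \in S1 h ->
           strategy_cost S2 c2 f2 (phiS h s) = strategy_cost S1 c1 f s)].

Definition is_path (V E : finType) (src tgt : E -> V) (O D : V)
  (P : {set E}) : Prop :=
  exists p : seq E,
    [/\ (match p with
         | [::] => O == D
         | e :: p' => [&& src e == O,
                          path (fun e1 e2 => tgt e1 == src e2) e p'
                        & last (tgt e) (map tgt p') == D]
         end),
        uniq (O :: map tgt p)
      & P = [set e in p]].

(* Two-terminal series-parallel networks: terms built from single edges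
   by series and parallel composition, and their canonical realisation
   with vertices 0 (origin), 1 (destination), 2, 3, ... (fresh inner
   vertices) and edges given as a list of (src, tgt) pairs. *)
Inductive sp_term : Type :=
| SPEdge
| SPSeries of sp_term & sp_term
| SPParallel of sp_term & sp_term.

Fixpoint sp_build (t : sp_term) (o d k : nat) : seq (nat * nat) * nat :=
  match t with
  | SPEdge => ([:: (o, d)], k)
  | SPSeries a b =>
      let '(ea, k1) := sp_build a o k k.+1 in
      let '(eb, k2) := sp_build b k d k1 in (ea ++ eb, k2)
  | SPParallel a b =>
      let '(ea, k1) := sp_build a o d k in
      let '(eb, k2) := sp_build b o d k1 in (ea ++ eb, k2)
  end.

Definition sp_edges (t : sp_term) : seq (nat * nat) := (sp_build t 0 1 2).1.
Definition sp_nverts (t : sp_term) : nat := (sp_build t 0 1 2).2.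

Definition is_series_parallel (V E : finType) (src tgt : E -> V) (O D : V)
  : Prop :=
  exists (t : sp_term) (fV : V -> nat) (fE : E -> nat),
  [/\ [/\ injective fV, (forall v, (fV v < sp_nverts t)%N) & #|V| = sp_nverts t],
      [/\ injective fE, (forall e, (fE e < size (sp_edges t))%N)
         & #|E| = size (sp_edges t)],
      fV O = 0%N, fV D = 1%N
    & forall e, nth (0%N, 0%N) (sp_edges t) (fE e) = (fV (src e), fV (tgt e))].

(* Main.v *)
Require Import Defs.
From HB Require Import structures.
From mathcomp Require Import all_boot all_order all_algebra.
From mathcomp Require Import all_classical all_reals all_analysis.
From mathcomp Require Import zify.
Import Order.TTheory GRing.Theory Num.Theory.
Import numFieldNormedType.Exports.

Fixpoint chain (k : nat) : sp_term :=
  match k with 0 => SPEdge | k'.+1 => SPSeries (SPParallel SPEdge SPEdge) (chain k') end.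

Fixpoint ch_edges (k o d m : nat) : seq (nat * nat) :=
  match k with 0 => [:: (o, d)] | k'.+1 => (o, m) :: (o, m) :: ch_edges k' m d m.+1 end.

Lemma build_chain k o d m : sp_build (chain k) o d m = (ch_edges k o d m, m + k).
Proof.
elim: k o d m => [|k IH] o d m /=; first by rewrite addn0.
by rewrite IH addSnnS.
Qed.

Lemma size_ch k o d m : size (ch_edges k o d m) = (k.*2).+1.
Proof. by elim: k o d m => [|k IH] o d m //=; rewrite IH. Qed.

Lemma nth_ch k o d m j : j <= k.*2 ->
  nth (0%N, 0%N) (ch_edges k o d m) j =
  (if j./2 == 0%N then o else (m + j./2).-1, if j./2 < k then m + j./2 else d).
Proof.
elim: k o d m j => [|k IH] o d m j.
  by case: j.
case: j => [|[|j]] Hj /=.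
- by rewrite addn0.
- by rewrite addn0.
rewrite IH; last by move: Hj; rewrite !doubleS ltnS ltnS.
rewrite ltnS addnS addSn /=; by case: (j./2 == 0%N) /eqP => [->|]; rewrite ?addn0.
Qed.

Lemma last_iota a k : last a (iota a.+1 k) = (a + k)%N.
Proof. by elim: k a => [|k IH] a /=; rewrite ?addn0 // IH addSnnS. Qed.

Lemma path_iota (Rl : rel nat) m k :
  (forall i, (m <= i < m + k)%N -> Rl i i.+1) -> path Rl m (iota m.+1 k).
Proof.
elim: k m => [|k IH] m H //=.
rewrite H ?leqnn ?addnS ?ltnS ?leq_addr //= IH // => i /andP[a b].
apply: H; rewrite -addSnnS b andbT; exact: ltnW.
Qed.


Lemma is_path_intro (V E : finType) (src tgt : E -> V) (O D : V) (g : nat -> E) k (P : {set E}) :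
  src (g 0) = O ->
  (forall i, i < k -> tgt (g i) = src (g i.+1)) ->
  tgt (g k) = D ->
  (forall i, i <= k -> tgt (g i) != O) ->
  (forall i j, i <= k -> j <= k -> tgt (g i) = tgt (g j) -> i = j) ->
  P = [set x in map g (iota 0 k.+1)] -> is_path src tgt O D P.
Proof.
move=> H0 Hs HD HO Hinj HP; exists (map g (iota 0 k.+1)); split => //.
- rewrite /=; apply/and3P; split; first by apply/eqP.
  + rewrite path_map; apply: path_iota => i /andP[_ Hi]; apply/eqP; exact: Hs.
  + by rewrite (last_map tgt) (last_map g) last_iota HD.
- rewrite cons_uniq -map_comp (map_inj_in_uniq (f := tgt \o g)) ?iota_uniq ?andbT; last first.
    move=> i j; rewrite !mem_iota ?add0n !ltnS => /andP[_ Hi] /andP[_ Hj]; exact: Hinj.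
  apply/mapP => -[i]; rewrite mem_iota ?add0n ltnS => /andP[_ Hi] E'.
  by have := HO i Hi; rewrite E' eqxx.
Qed.

Section Constr.
Variable Res : finType.
Local Notation n := #|Res|.
Local Notation Vt := 'I_(n.+2).
Local Notation Et := 'I_((n.*2).+1).

Definition srcf (e : Et) : Vt := inord (if e./2 == 0%N then 0%N else e./2.+1).
Definition tgtf (e : Et) : Vt := inord (if e./2 < n then e./2.+2 else 1%N).

Lemma half_Et (e : Et) : e./2 <= n.
Proof. have H : (e <= (false + n.*2))%N by rewrite add0n -ltnS. by have := half_leq H; rewrite half_bit_double. Qed.

Lemma srcfE e : nat_of_ord (srcf e) = if e./2 == 0%N then 0%N else e./2.+1.
Proof. have H := half_Et e; rewrite /srcf inordK //; case: ifP => // _; rewrite !ltnS. Qed.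
Lemma tgtfE e : nat_of_ord (tgtf e) = if e./2 < n then e./2.+2 else 1%N.
Proof. rewrite /tgtf inordK //; case: ifP => //. Qed.

Definition rb (s : {set Res}) (i : nat) : bool :=
  if (insub i : option 'I_n) is Some j then enum_val j \notin s else false.

Definition pk s (i : nat) : Et := inord (if i < n then i.*2 + rb s i else n.*2).

Lemma pk_val s i : i <= n -> nat_of_ord (pk s i) = if i < n then i.*2 + rb s i else n.*2.
Proof.
move=> Hi; rewrite /pk inordK //; case: ifP => // H.
rewrite ltnS -!mul2n; case: (rb s i); lia.
Qed.

Lemma pk_half s i : i <= n -> (nat_of_ord (pk s i))./2 = i.
Proof.
move=> Hi; rewrite pk_val //; case: ifP => H; first by rewrite addnC half_bit_double.
by rewrite doubleK; apply/eqP; rewrite eqn_leq Hi leqNgt H.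
Qed.

Definition pathseq s := map (pk s) (iota 0 n.+1).
Definition ph s : {set Et} := [set e in pathseq s].

Definition res_of (e : Et) : option Res :=
  if odd e then None else omap enum_val (insub (e./2) : option 'I_n).

Definition er (r : Res) : Et := inord (enum_rank r).*2.

Lemma er_val r : nat_of_ord (er r) = (enum_rank r).*2.
Proof. rewrite /er inordK // ltnS leq_double; exact: ltnW. Qed.

Lemma res_of_er r : res_of (er r) = Some r.
Proof.
by rewrite /res_of er_val odd_double -[(_.*2)]add0n (half_bit_double _ false) valK /= enum_rankK.
Qed.

Lemma er_inj : injective er.
Proof. by move=> r1 r2 H; have := res_of_er r1; rewrite H res_of_er => -[]. Qed.

Lemma ph_class s e r : e \in ph s -> res_of e = Some r -> e = er r /\ r \in s.
Proof.
rewrite inE => /mapP[i]; rewrite mem_iota add0n ltnS => /andP[_ Hi] ->.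
rewrite /res_of pk_half // pk_val //.
case: ltnP => Hin; last first.
  by rewrite odd_double insubF //= ltnNge Hin.
have [j ji] : exists j : 'I_n, val j = i by exists (Ordinal Hin).
rewrite -ji in Hin Hi *.
have rbj : rb s (val j) = (enum_val j \notin s) by rewrite /rb valK.
rewrite oddD odd_double oddb addFb rbj valK.
case E: (enum_val j \in s) => // -[<-]; split => //.
apply: ord_inj; rewrite er_val pk_val // Hin rbj E addn0 enum_valK //.
Qed.

Lemma er_in_ph s r : (er r \in ph s) = (r \in s).
Proof.
apply/idP/idP => [H|H]; first by have [_ ?] := ph_class _ _ _ H (res_of_er r).
rewrite inE; apply/mapP; exists (val (enum_rank r)).
  rewrite mem_iota add0n ltnS leq0n andTb; exact: ltnW (ltn_ord _).
have rbj : rb s (val (enum_rank r)) = (r \notin s) by rewrite /rb valK enum_rankK.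
have Hr : val (enum_rank r) < n := ltn_ord _.
apply: ord_inj; rewrite er_val pk_val ?(ltnW Hr) // Hr rbj H addn0 //.
Qed.

Lemma ph_inj : injective ph.
Proof. move=> s1 s2 H; apply/setP => r; by rewrite -!er_in_ph H. Qed.

Lemma ph_path s : is_path srcf tgtf (inord 0) (inord 1) (ph s).
Proof.
have H0 : 0 <= n by [].
have Hn : n <= n by [].
apply: (@is_path_intro _ _ _ _ _ _ (pk s) n).
- apply/ord_inj; rewrite srcfE pk_half // inordK //.
- move=> i Hi; have Hi' : i.+1 <= n by [].
  apply/ord_inj; rewrite tgtfE srcfE !pk_half ?(ltnW Hi) // Hi //.
- apply/ord_inj; rewrite [LHS]tgtfE pk_half // ltnn inordK //.
- move=> i Hi; apply/eqP => /(congr1 (@nat_of_ord _)).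
  rewrite tgtfE pk_half // inordK //; case: ifP => //.
- move=> i j Hi Hj /(congr1 (@nat_of_ord _)); rewrite !tgtfE !pk_half //.
  by do 2 case: ltnP => ?; lia.
- by [].
Qed.

Lemma sp_ok : is_series_parallel srcf tgtf (inord 0) (inord 1).
Proof.
exists (chain n), (@nat_of_ord _), (@nat_of_ord _).
rewrite /sp_nverts /sp_edges build_chain size_ch add2n.
split.
- split; [exact: ord_inj | exact: ltn_ord | exact: card_ord].
- split; [exact: ord_inj | exact: ltn_ord | exact: card_ord].
- by rewrite inordK.
- by rewrite inordK.
- move=> e; have He : (nat_of_ord e <= n.*2)%N by rewrite -ltnS.
  rewrite [fst _]/= nth_ch // srcfE tgtfE add2n //.
Qed.

Definition ce (R : realType) (c : Res -> R -> R) (e : Et) : R -> R :=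
  if res_of e is Some r then c r else (fun _ => 0%R).

End Constr.

Local Open Scope ring_scope.

Theorem proposition5p1 (R : realType) (Res Com : finType)
  (S : Com -> {set {set Res}}) (c : Res -> R -> R) :
  strategies_nonempty S ->
  (forall r, cost_fun_ok (c r)) ->
  exists (V E : finType) (src tgt : E -> V) (O D : V)
         (Com2 : finType) (P : Com2 -> {set {set E}}) (ce : E -> R -> R),
    [/\ is_series_parallel src tgt O D,
        (forall e, cost_fun_ok (ce e)),
        strategies_nonempty P,
        (forall h p, p \in P h -> is_path src tgt O D p)
      & cg_equivalent S c P ce].
Proof.
move=> HS Hc.
exists _, _, (@srcf Res), (@tgtf Res), (inord 0), (inord 1), Com,
  (fun h => (@ph Res) @: S h), (@ce Res R c).
split.
- exact: sp_ok.
- move=> e; rewrite /ce; case: (@res_of Res e) => [r|]; first exact: Hc.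
  split => [x _|x y _ _|] //; apply: continuous_subspaceT => x; exact: cst_continuous.
- by move=> h; rewrite imset_eq0; exact: HS.
- by move=> h p /imsetP[s _ ->]; exact: ph_path.
exists id, (fun _ => @ph Res); split.
- by exists id.
- by move=> h s1 s2 _ _; exact: ph_inj.
- by [].
move=> mu f mu2 f2 Hmu Hf Hmu2 Hf2.
have phI : forall h, {in S h &, injective (@ph Res)} by move=> h ? ? _ _; exact: ph_inj.
have Lr : forall r, load (fun h => (@ph Res) @: S h) f2 (@er Res r) = load S f r.
  move=> r; rewrite /load; apply: eq_bigr => h _.
  rewrite big_mkcondr big_imset // [RHS]big_mkcondr; apply: eq_bigr => s Hs.
  by rewrite er_in_ph Hf2.
split.
- move=> h; split.
    by move=> p /imsetP[s Hs ->]; rewrite Hf2 //; exact: (Hf h).1.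
  rewrite big_imset // Hmu2 -(Hf h).2; apply: eq_bigr => s Hs; exact: Hf2.
- move=> h s Hs; rewrite /strategy_cost.
  rewrite (bigID (fun e => @res_of Res e != None)) [X in _ _ X = _]big1 ?Monoid.simpm; last first.
    by move=> e /andP[_]; rewrite /ce; case: (@res_of Res e).
  rewrite (eq_bigl (mem ((@er Res) @: s))); last first.
    move=> e; apply/andP/imsetP => [[He]|[r Hr ->]].
      case E: (@res_of Res e) => [r|] // _.
      by have [-> ?] := ph_class _ _ _ _ He E; exists r.
    by rewrite er_in_ph res_of_er.
  rewrite big_imset; last by move=> ? ? _ _; exact: (@er_inj Res).
  by apply: eq_bigr => r _; rewrite /ce res_of_er Lr.
Qed.
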